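(* Let $r$, $s$, $c$ and $a_n$ be any integers and let $n$ be a positive integer, and assume $V_r\neq0$. Then \[ \sum_{a_{n-1}=c}^{a_n}\sum_{a_{n-2}=c}^{a_{n-1}}\cdots\sum_{a_0=c}^{a_1}\frac{(-1)^{a_0}W_{2ra_0+s}}{q^{ra_0}} =(-1)^{a_n}\frac{W_{r(2a_n+n)+s}}{q^{ra_n}V_r^n}+\frac{(-1)^c}{q^{r(c-1)}}\sum_{j=0}^{n-1}\frac{W_{r(n-j+2c-2)+s}}{V_r^{n-j}}\binom{a_n+j-c}{j}. \]
   Context: Let $a,b,p,q$ be complex numbers with $p\neq0$, $q\neq0$. The Horadam sequence $W_j=W_j(a,b;p,q)$ is defined by $W_0=a$, $W_1=b$, $W_j=pW_{j-1}-qW_{j-2}$ for $j\ge2$, and extended to negative indices by $W_{-m}=(pW_{-m+1}-W_{-m+2})/q$, so the recurrence holds for all integers. $V_j=W_j(2,p;p,q)$ is the Lucas sequence of the second kind. For integers $c,m$ and a function $f$ on the integers, $\sum_{k=c}^m f(k)$ denotes the usual sum if $m\ge c$, equals $0$ if $m=c-1$, and equals $-\sum_{k=m+1}^{c-1}f(k)$ if $m\le c-2$. The nested sum $\sum_{a_{n-1}=c}^{a_n}\cdots\sum_{a_0=c}^{a_1}g(a_0)$ is the iterated sum with $n$ summation signs: innermost over $a_0$ from $c$ to $a_1$, then $a_1$ from $c$ to $a_2$, ..., outermost $a_{n-1}$ from $c$ to $a_n$. For an integer $j\ge0$ and any number $y$, $\binom{y}{j}=y(y-1)\cdots(y-j+1)/j!$.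 *)

(* Defs.v *)
(* Complex numbers are modelled as R[i] = complex R for an
   arbitrary R : realType (every realType is a complete archimedean ordered
   field, i.e. a copy of the reals). *)
From mathcomp Require Import all_boot all_order all_algebra.
From mathcomp Require Export reals complex.
Set Implicit Arguments. Unset Strict Implicit. Unset Printing Implicit Defensive.
Import Order.TTheory GRing.Theory Num.Theory.
Local Open Scope ring_scope.

Section Horadam.
Variable F : fieldType.

(* forward pairs (W_n, W_{n+1}) for n >= 0 *)
Fixpoint Wfwd (a b p q : F) (n : nat) : F * F :=
  match n with
  | 0 => (a, b)
  | n'.+1 => let: (x, y) := Wfwd a b p q n' in (y, p * y - q * x)
  end.

(* backward pairs (W_{-n}, W_{-n+1}) for n >= 0, using
   W_{-m} = (p W_{-m+1} - W_{-m+2}) / q *)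
Fixpoint Wbwd (a b p q : F) (n : nat) : F * F :=
  match n with
  | 0 => (a, b)
  | n'.+1 => let: (x, y) := Wbwd a b p q n' in ((p * x - y) / q, x)
  end.

Definition W (a b p q : F) (j : int) : F :=
  match j with
  | Posz n => (Wfwd a b p q n).1
  | Negz n => (Wbwd a b p q n.+1).1   (* Negz n = -(n+1) *)
  end.

Definition V (p q : F) (j : int) : F := W 2 p p q j.

Definition gbinom (y : F) (j : nat) : F :=
  (\prod_(i < j) (y - i%:R)) / (j`!)%:R.
End Horadam.

(* Sum with the paper's convention for integer bounds:
   sum_{k=c}^m f k = usual sum if m >= c, 0 if m = c-1,
   and - sum_{k=m+1}^{c-1} f k if m <= c-2. *)
Definition gsum (G : zmodType) (c m : int) (f : int -> G) : G :=
  if (c <= m)%R then \sum_(i < absz (m - c + 1)%R) f (c + i%:Z)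
  else - \sum_(i < absz (c - m - 1)%R) f (m + 1 + i%:Z).

(* nested sum with n summation signs:
   nested n c g x = sum_{a_{n-1}=c}^{x} ... sum_{a_0=c}^{a_1} g a_0 *)
Fixpoint nested (G : zmodType) (n : nat) (c : int) (g : int -> G) : int -> G :=
  match n with
  | 0 => g
  | n'.+1 => fun x => gsum c x (nested n' c g)
  end.

(* Main.v *)
Require Import Defs.
From mathcomp Require Import all_boot all_order all_algebra.
From mathcomp Require Import reals complex.
From mathcomp Require Import ring lra zify.
Import Order.TTheory GRing.Theory Num.Theory.
Local Open Scope ring_scope.

Lemma int_ind2 (P : int -> Prop) : P 0 -> P 1 -> (forall r, P r -> P (r+1) -> P (r+2)) ->
  (forall r, P (r+1) -> P (r+2) -> P r) -> forall r, P r.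
Proof.
move=> P0 P1 Hu Hd.
have A : forall n : nat, P n /\ P (n.+1).
  elim=> [|n [IH1 IH2]]; first by split.
  split => //. have := Hu _ IH1. rewrite (_ : Posz n + 1 = n.+1) // ; last by lia.
  by rewrite (_ : Posz n + 2 = n.+2); [apply|lia].
have B : forall n : nat, P (- n%:Z) /\ P (1 - n%:Z).
  elim=> [|n [IH1 IH2]]; first by split.
  split => //; last by rewrite (_ : 1 - n.+1%:Z = - n%:Z) //; lia.
  apply: Hd.
    by rewrite (_ : - n.+1%:Z + 1 = - n%:Z); [|lia].
  by rewrite (_ : - n.+1%:Z + 2 = 1 - n%:Z); [|lia].
case=> n; first by case: (A n).
by rewrite NegzE; case: (B n.+1).
Qed.

Section WL.
Variable F : fieldType.
Variables a b p q : F.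
Hypothesis q0 : q != 0.

Lemma Wfwd_pair n : Wfwd a b p q n = (W a b p q n, W a b p q n.+1).
Proof.
elim: n => [|n IH] //=.
rewrite /W /=. by case: (Wfwd a b p q n).
Qed.

Lemma Wpos_rec (n : nat) : W a b p q (n.+2) = p * W a b p q n.+1 - q * W a b p q n.
Proof.
rewrite {1}/W /= (Wfwd_pair n) /=. done.
Qed.

Lemma Wneg_def (n : nat) : W a b p q (- n%:Z) = (Wbwd a b p q n).1.
Proof. by case: n. Qed.

Lemma Wbwd_snd (n : nat) : (Wbwd a b p q n).2 = W a b p q (1 - n%:Z).
Proof.
elim: n => [|n IH] //=.
case E: (Wbwd a b p q n) => [x y] /=.
have -> : (1 - n.+1%:Z) = - n%:Z by rewrite -addn1 PoszD; ring.
by rewrite Wneg_def E.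
Qed.

Lemma Wneg_rec (n : nat) : q * W a b p q (- (n.+1)%:Z) = p * W a b p q (- n%:Z) - W a b p q (1 - n%:Z).
Proof.
rewrite !Wneg_def -Wbwd_snd /=.
case E: (Wbwd a b p q n) => [x y] /=.
by rewrite mulrC divfK.
Qed.

Lemma Wrec (j : int) : W a b p q (j + 2) = p * W a b p q (j + 1) - q * W a b p q j.
Proof.
case: j => n.
  have -> : (Posz n + 2 = n.+2%:Z) by rewrite -PoszD addn2.
  have -> : (Posz n + 1 = n.+1%:Z) by rewrite -PoszD addn1.
  exact: Wpos_rec.
have E : Negz n = - (n.+1)%:Z by rewrite NegzE.
rewrite E Wneg_rec.
have -> : - (n.+1)%:Z + 2 = 1 - n%:Z by rewrite -addn1 PoszD; ring.
have -> : - (n.+1)%:Z + 1 = - n%:Z by rewrite -addn1 PoszD; ring.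
ring.
Qed.

Lemma Wrec_at (j0 j1 j2 : int) : j1 = j0 + 1 -> j2 = j0 + 2 ->
  W a b p q j2 = p * W a b p q j1 - q * W a b p q j0.
Proof. by move=> -> ->; apply: Wrec. Qed.

End WL.

Lemma V0 (F : fieldType) (p q : F) : V p q 0 = 2. Proof. by []. Qed.
Lemma V1 (F : fieldType) (p q : F) : V p q 1 = p. Proof. by []. Qed.

Lemma WV (F : fieldType) (a b p q : F) : q != 0 -> forall r m : int,
  W a b p q (m + r) + q ^ r * W a b p q (m - r) = V p q r * W a b p q m.
Proof.
move=> q0; have qu : q \is a GRing.unit by rewrite unitfE.
apply: int_ind2.
- move=> m; rewrite V0 expr0z mul1r (_ : m - 0 = m) ?addr0; [ring|lia].
- move=> m; rewrite V1 expr1z.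
  rewrite (@Wrec_at _ a b p q q0 (m - 1) (m) (m + 1)); [ring|ring|ring].
- move=> r IH0 IH1 m.
  rewrite /V (@Wrec_at _ 2 p p q q0 (r) (r + 1) (r + 2)) //.
  rewrite -/(V p q (r+1)) -/(V p q r) mulrBl -mulrA -IH1 -mulrA -IH0.
  rewrite (@Wrec_at _ a b p q q0 (m + r) (m + (r+1)) (m + (r + 2))); [|ring|ring].
  have e := @Wrec_at _ a b p q q0 (m - (r+2)) (m - (r+1)) (m - r) ltac:(ring) ltac:(ring).
  have E1 : q ^ (r + 1) = q ^ r * q by rewrite exprzDr // expr1z.
  have E2 : q ^ (r + 2) = q ^ r * q * q by rewrite exprzDr // -mulrA -expr2.
  rewrite E1 E2.
  have -> : q ^ r * q * q * W a b p q (m - (r + 2)) = q ^ r * q * (q * W a b p q (m - (r + 2))) by ring.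
  have -> : q * W a b p q (m - (r + 2)) = p * W a b p q (m - (r + 1)) - W a b p q (m - r) by rewrite e; ring.
  ring.
- move=> r IH1 IH2 m.
  apply: (mulfI q0).
  have hv : q * V p q r = p * V p q (r + 1) - V p q (r + 2).
    rewrite /V (@Wrec_at _ 2 p p q q0 (r) (r + 1) (r + 2)) //; ring.
  rewrite mulrA hv mulrBl -mulrA -IH1 -IH2.
  rewrite (@Wrec_at _ a b p q q0 (m + r) (m + (r+1)) (m + (r + 2))); [|ring|ring].
  rewrite (@Wrec_at _ a b p q q0 (m - (r+2)) (m - (r+1)) (m - r)); [|ring|ring].
  have E1 : q ^ (r + 1) = q ^ r * q by rewrite exprzDr // expr1z.
  have E2 : q ^ (r + 2) = q ^ r * q * q by rewrite exprzDr // -mulrA -expr2.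
  rewrite E1 E2; ring.
Qed.

Lemma tele_ord (G : zmodType) (f : int -> G) (x : int) (N : nat) :
  \sum_(i < N) (f (x + i%:Z) - f (x + i%:Z - 1)) = f (x + N%:Z - 1) - f (x - 1).
Proof.
elim: N => [|N IH]; first by rewrite big_ord0 addr0 subrr.
rewrite big_ord_recr /= IH.
rewrite (_ : x + N.+1%:Z - 1 = x + N%:Z); last by lia.
by rewrite addrC addrA subrK.
Qed.

Lemma gsum_tele (G : zmodType) (f : int -> G) (c m : int) :
  gsum c m (fun k => f k - f (k - 1)) = f m - f (c - 1).
Proof.
rewrite /gsum; case: ifP => H.
  rewrite tele_ord gez0_abs; last by lia.
  by rewrite (_ : c + (m - c + 1) - 1 = m); last by lia.
rewrite tele_ord gez0_abs; last by lia.
rewrite (_ : m + 1 + (c - m - 1) - 1 = c - 1); last by lia.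
rewrite (_ : m + 1 - 1 = m); last by lia.
by rewrite opprB.
Qed.

Lemma gsum_ext (G : zmodType) (f g : int -> G) (c m : int) :
  (forall k, f k = g k) -> gsum c m f = gsum c m g.
Proof.
move=> H; rewrite /gsum; case: ifP => _.
  by apply: eq_bigr => i _; apply: H.
by congr (- _); apply: eq_bigr => i _; apply: H.
Qed.

Lemma gbinom0 (F : fieldType) (y : F) : gbinom y 0 = 1.
Proof. by rewrite /gbinom big_ord0 fact0 divr1. Qed.

Lemma gbinom_pascal (F : numFieldType) (y : F) (j : nat) :
  gbinom y j.+1 - gbinom (y - 1) j.+1 = gbinom (y - 1) j.
Proof.
rewrite /gbinom big_ord_recl big_ord_recr /=.
set P := \prod_(i < j) (y - 1 - i%:R).
have -> : \prod_(i < j) (y - (bump 0 i)%:R) = P.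
  by apply: eq_bigr => i _; rewrite /bump /= add1n -addn1 natrD opprD addrA addrAC.
have hf : (j`!)%:R != 0 :> F by rewrite pnatr_eq0 -lt0n fact_gt0.
have hj : (j.+1)%:R != 0 :> F by rewrite pnatr_eq0.
rewrite factS natrM.
rewrite (_ : y - 1 - j%:R = y - (j.+1)%:R); last by rewrite -addn1 natrD; ring.
rewrite -natr1 addrC in hj; field; by rewrite hf hj.
Qed.

Section Main.
Variable F : numFieldType.
Variables (a b p q : F) (r s c : int).
Hypothesis q0 : q != 0.
Hypothesis v0 : V p q r != 0.

Definition Xf (n : nat) (k : int) : F :=
  (-1) ^ k * W a b p q (r * (2 * k + n%:Z) + s) / (q ^ (r * k) * V p q r ^+ n).
Definition Sf (n : nat) (k : int) : F :=
  \sum_(j < n) W a b p q (r * (n%:Z - j%:Z + 2 * c - 2) + s) / V p q r ^+ (n - j)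
                   * gbinom (k + j%:Z - c)%:~R j.
Definition Cc : F := (-1) ^ c / q ^ (r * (c - 1)).
Definition Rf (n : nat) (k : int) : F := Xf n k + Cc * Sf n k.

Lemma m1pred (k : int) : (-1 : F) ^ (k - 1) = - (-1) ^ k.
Proof. by rewrite exprzDr ?unitrN1 // exprN1 invrN1 mulrN1. Qed.

Lemma B1 (n : nat) (k : int) : Xf n.+1 k - Xf n.+1 (k - 1) = Xf n k.
Proof.
rewrite /Xf m1pred.
set m := r * (2 * k + n%:Z) + s.
have e : (n.+1%:Z) = n%:Z + 1 by lia.
have hw := @WV _ a b p q q0 r m.
rewrite (_ : r * (2 * k + n.+1%:Z) + s = m + r); last by rewrite /m e; ring.
rewrite (_ : r * (2 * (k - 1) + n.+1%:Z) + s = m - r); last by rewrite /m e; ring.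
have qu : q \is a GRing.unit by rewrite unitfE.
rewrite (_ : q ^ (r * k) = q ^ (r * (k - 1)) * q ^ r); last by rewrite -exprzDr //; congr (_ ^ _); ring.
have h1 : q ^ (r * (k - 1)) != 0 by apply: expfz_neq0.
have h2 : q ^ r != 0 by apply: expfz_neq0.
have h3 : V p q r ^+ n != 0 by apply: expf_neq0.
rewrite exprSr.
have -> : W a b p q (m + r) = V p q r * W a b p q m - q ^ r * W a b p q (m - r) by rewrite -hw; ring.
field. by rewrite h1 h2 h3 v0.
Qed.

Lemma B2 (n : nat) (k : int) : Sf n.+1 k - Sf n.+1 (k - 1) = Sf n k.
Proof.
rewrite /Sf -sumrB big_ord_recl /= !gbinom0 subrr add0r.
apply: eq_bigr => i _.
rewrite -mulrBr /bump /= add1n subSS.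
rewrite (_ : n.+1%:Z - i.+1%:Z = n%:Z - i%:Z); last by lia.
rewrite (_ : k - 1 + i.+1%:Z - c = (k + i.+1%:Z - c) - 1); last by lia.
rewrite (_ : k + i%:Z - c = (k + i.+1%:Z - c) - 1); last by lia.
by rewrite !intrB gbinom_pascal.
Qed.

Lemma Bstep (n : nat) (k : int) : Rf n.+1 k - Rf n.+1 (k - 1) = Rf n k.
Proof.
rewrite /Rf -(B1 n k) -(B2 n k); ring.
Qed.

Lemma Azero (n : nat) : Rf n.+1 (c - 1) = 0.
Proof.
rewrite /Rf /Xf /Cc m1pred /Sf big_ord_recl /= gbinom0 subn0.
rewrite big1 ?addr0; last first.
  move=> i _; rewrite /gbinom big_ord_recr /=.
  rewrite (_ : c - 1 + (bump 0 i)%:Z - c = i%:Z); last by rewrite /bump /=; lia.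
  by rewrite -pmulrn subrr mulr0 mul0r mulr0.
rewrite (_ : r * (n.+1%:Z + 2 * c - 2) + s = r * (2 * (c - 1) + n.+1%:Z) + s); last by ring.
have h1 : q ^ (r * (c - 1)) != 0 by apply: expfz_neq0.
have h3 : V p q r ^+ n.+1 != 0 by apply: expf_neq0.
field. by rewrite h1 h3.
Qed.

Lemma main_eq (n : nat) (x : int) :
  nested n c (fun a0 : int => (-1) ^ a0 * W a b p q (2 * r * a0 + s) / q ^ (r * a0)) x
  = Rf n x.
Proof.
elim: n x => [|n IH] x /=.
  rewrite /Rf /Sf /Xf big_ord0 mulr0 addr0 expr0 mulr1.
  by rewrite (_ : r * (2 * x + 0%:Z) + s = 2 * r * x + s); last by ring.
rewrite (gsum_ext _ _ _ _ _ IH).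
rewrite (gsum_ext _ _ (fun k => Rf n.+1 k - Rf n.+1 (k - 1))); last by move=> k; rewrite Bstep.
by rewrite gsum_tele Azero subr0.
Qed.
End Main.

Theorem theorem4 (R : realType) (a b p q : R[i]) (r s c an : int) (n : nat) :
  p != 0 -> q != 0 -> (0 < n)%N -> V p q r != 0 ->
  nested n c (fun a0 : int => (-1) ^ a0 * W a b p q (2 * r * a0 + s) / q ^ (r * a0)) an
  = (-1) ^ an * W a b p q (r * (2 * an + n%:Z) + s) / (q ^ (r * an) * V p q r ^+ n)
    + (-1) ^ c / q ^ (r * (c - 1)) *
      \sum_(j < n) W a b p q (r * (n%:Z - j%:Z + 2 * c - 2) + s) / V p q r ^+ (n - j)
                   * gbinom (an + j%:Z - c)%:~R j.
Proof.
move=> _ q0 _ v0.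
exact: (@main_eq _ a b p q r s c q0 v0 n an).
Qed.
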